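(* Let $\mathcal B$ be a Bayesian network all of whose random variables are Boolean, and let $\Pi_{\mathcal B}$ be its $\mathrm{LP}^{\mathrm{MLN}}$ translation. Then for every truth assignment $I$ to the random variables of $\mathcal B$ (identified with the set of variables assigned true), the probability of $I$ under $\mathcal B$ equals $\sum_{J} P_{\Pi_{\mathcal B}}(J)$, where $J$ ranges over the interpretations of $\Pi_{\mathcal B}$ whose restriction to the variable atoms is $I$.
   Context: $\mathrm{LP}^{\mathrm{MLN}}$: a program is a finite set of weighted rules $w:R$ with $w$ real or the symbol $\alpha$ (infinite weight). For ground $\Pi$ and interpretation $I$: $\overline{\Pi}$ drops weights, $\Pi_I$ is the set of rules satisfied by $I$, $\mathrm{SM}[\Pi]=\{I: I\text{ stable model of }\overline{\Pi_I}\}$, $W_\Pi(I)=\exp(\sum_{w:R\in\Pi_I}w)$ if $I\in\mathrm{SM}[\Pi]$ and $0$ otherwise, and $P_\Pi(I)=\lim_{\alpha\to\infty}W_\Pi(I)/\sum_{J\in\mathrm{SM}[\Pi]}W_\Pi(J)$. Translation $\Pi_{\mathcal B}$: each random variable $V$ is an atom. For each node $V$ with parents $V_1,\dots,V_n$ ($n\ge0$) and each conditional probability table entry $P(V=\mathbf t\mid V_1=S_1,\dots,V_n=S_n)=p$, $S_j\in\{\mathbf t,\mathbf f\}$, introduce an atom $PF(V,S_1,\dots,S_n)$ and include: the weighted fact $\ln(p/(1-p)): PF(V,S_1,\dots,S_n)$ if $0<p<1$; the hard fact $\alpha: PF(V,S_1,\dots,S_n)$ if $p=1$; the hard constraint $\alpha:\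 \leftarrow \mathtt{not}\ PF(V,S_1,\dots,S_n)$ if $p=0$. Also include for each such entry the hard rule $\alpha: V\leftarrow V_1^{S_1},\dots,V_n^{S_n}, PF(V,S_1,\dots,S_n)$, where $V_j^{S_j}$ is $V_j$ if $S_j=\mathbf t$ and $\mathtt{not}\ V_j$ if $S_j=\mathbf f$. *)

(* Defs.v *)
From Stdlib Require Import Reals List Bool Arith.
Import ListNotations.
Open Scope R_scope.

(* Atoms of the translation: variable atoms V and PF(V,S_1,...,S_n). *)
Inductive atom : Type :=
| AVar : nat -> atom
| APF  : nat -> list bool -> atom.

Definition atom_eq_dec : forall a b : atom, {a = b} + {a <> b}.
Proof. decide equality; first [apply list_eq_dec; apply bool_dec | apply Nat.eq_dec]. Defined.

Definition atom_eqb (a b : atom) : bool := if atom_eq_dec a b then true else false.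

Definition interp := atom -> bool.

Inductive weight : Type := WReal (w : R) | WAlpha.

(* Normal rule  head <- pos, not neg  ; head = None is a constraint. *)
Record rule : Type := mkRule { rhead : option atom; rpos : list atom; rneg : list atom }.

Definition program := list (weight * rule).

Definition body_holds (J : interp) (r : rule) : bool :=
  forallb (fun a => J a) (rpos r) && forallb (fun a => negb (J a)) (rneg r).

Definition head_holds (J : interp) (r : rule) : bool :=
  match rhead r with Some h => J h | None => false end.

Definition satb (J : interp) (r : rule) : bool := implb (body_holds J r) (head_holds J r).

(* J |= r^I  (Gelfond-Lifschitz reduct of r w.r.t. I) *)
Definition reduct_satb (I J : interp) (r : rule) : bool :=
  if existsb (fun a => I a) (rneg r) then true   (* rule deleted from reduct *)
  else implb (forallb (fun a => J a) (rpos r)) (head_holds J r).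

(* All interpretations over a signature (list of atoms): false outside it. *)
Definition upd (f : interp) (a : atom) (b : bool) : interp :=
  fun x => if atom_eqb x a then b else f x.

Fixpoint interps (sg : list atom) : list interp :=
  match sg with
  | [] => [fun _ => false]
  | a :: l => flat_map (fun f => [upd f a false; upd f a true]) (interps l)
  end.

Definition subb (sg : list atom) (J I : interp) : bool := forallb (fun a => implb (J a) (I a)) sg.
Definition eqb_on (sg : list atom) (J I : interp) : bool := forallb (fun a => Bool.eqb (J a) (I a)) sg.

Definition stableb (sg : list atom) (P : list rule) (I : interp) : bool :=
  forallb (satb I) P &&
  forallb (fun J => implb (subb sg J I && forallb (reduct_satb I J) P) (eqb_on sg J I))
          (interps sg).

Definition sat_part (Pi : program) (I : interp) : program :=
  filter (fun wr => satb I (snd wr)) Pi.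

Definition unweight (Pi : program) : list rule := map snd Pi.

Definition wval (alpha : R) (w : weight) : R :=
  match w with WReal x => x | WAlpha => alpha end.

Definition sumR {A} (f : A -> R) (l : list A) : R := fold_right Rplus 0 (map f l).
Definition prodR {A} (f : A -> R) (l : list A) : R := fold_right Rmult 1 (map f l).

(* W_Pi(I), with alpha given a concrete real value *)
Definition Wt (sg : list atom) (Pi : program) (alpha : R) (I : interp) : R :=
  if stableb sg (unweight (sat_part Pi I)) I
  then exp (sumR (fun wr => wval alpha (fst wr)) (sat_part Pi I))
  else 0.

(* P_Pi(I) = p, i.e. lim_{alpha -> oo} W(I) / sum_J W(J) = p,
   J ranging over the interpretations of the signature. *)
Definition lpmln_prob (sg : list atom) (Pi : program) (I : interp) (p : R) : Prop :=
  forall eps, eps > 0 -> exists M : R, forall alpha, alpha > M ->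
    Rabs (Wt sg Pi alpha I / sumR (Wt sg Pi alpha) (interps sg) - p) < eps.

(* Nodes are 0..bn_n-1.  bn_par v = list of parents of v (in a fixed order);
   bn_cpt v s = P(v = t | parents = s) for s : list bool of length |bn_par v|. *)
Record BN : Type := mkBN { bn_n : nat; bn_par : nat -> list nat; bn_cpt : nat -> list bool -> R }.

(* Well-formedness: nodes numbered in a topological order of the DAG
   (every parent has smaller index), parent lists duplicate-free,
   CPT entries are probabilities. *)
Definition bn_wf (B : BN) : Prop :=
  forall v, (v < bn_n B)%nat ->
    NoDup (bn_par B v) /\
    (forall u, In u (bn_par B v) -> (u < v)%nat) /\
    (forall s, length s = length (bn_par B v) -> 0 <= bn_cpt B v s <= 1).

Fixpoint all_assign (k : nat) : list (list bool) :=
  match k with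
  | O => [[]]
  | S k' => flat_map (fun s => [true :: s; false :: s]) (all_assign k')
  end.

Definition bn_prob (B : BN) (I : nat -> bool) : R :=
  prodR (fun v => let p := bn_cpt B v (map I (bn_par B v)) in
                  if I v then p else 1 - p)
        (seq 0 (bn_n B)).

(* Hard rule  alpha : V <- V_1^{S_1},...,V_n^{S_n}, PF(V,S_1..S_n) *)
Definition bn_rule (B : BN) (v : nat) (s : list bool) : rule :=
  mkRule (Some (AVar v))
         (map (fun us => AVar (fst us)) (filter (fun us => snd us) (combine (bn_par B v) s))
            ++ [APF v s])
         (map (fun us => AVar (fst us)) (filter (fun us => negb (snd us)) (combine (bn_par B v) s))).

Definition pf_rules (v : nat) (s : list bool) (p : R) : program :=
  if Rlt_dec 0 p then
    if Rlt_dec p 1 then [(WReal (ln (p / (1 - p))), mkRule (Some (APF v s)) [] [])]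
    else [(WAlpha, mkRule (Some (APF v s)) [] [])]           (* p = 1 *)
  else [(WAlpha, mkRule None [APF v s] [])].                 (* p = 0 :  alpha : <- PF *)

Definition translate (B : BN) : program :=
  flat_map (fun v =>
     flat_map (fun s => pf_rules v s (bn_cpt B v s) ++ [(WAlpha, bn_rule B v s)])
              (all_assign (length (bn_par B v))))
     (seq 0 (bn_n B)).

Definition bn_sig (B : BN) : list atom :=
  flat_map (fun v => AVar v :: map (APF v) (all_assign (length (bn_par B v))))
           (seq 0 (bn_n B)).

Definition restricts_to (B : BN) (J : interp) (I : nat -> bool) : bool :=
  forallb (fun v => Bool.eqb (J (AVar v)) (I v)) (seq 0 (bn_n B)).

(* Main.v *)
From Coquelicot Require Import Coquelicot.
Require Import Defs.
From Stdlib Require Import Reals List Lra Lia Permutation FunctionalExtensionality Bool Arith Wf_nat.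
Import ListNotations.
Open Scope R_scope.

Definition ez (x : R) : R := if Req_EM_T x 0 then 1 else 0.

Lemma lim_exp_neg (d : R) : 0 <= d -> is_lim (fun a => exp (- (a * d))) p_infty (ez d).
Proof.
  intros Hd. unfold ez. destruct (Req_EM_T d 0) as [E|E].
  - subst. eapply is_lim_ext; [| apply is_lim_const]. intros y. simpl.
    rewrite Rmult_0_r, Ropp_0, exp_0. reflexivity.
  - assert (Hp : 0 < d) by lra.
    eapply (is_lim_comp (fun y => exp y) (fun a => - (a * d)) p_infty 0 m_infty).
    + apply is_lim_exp_m.
    + apply is_lim_spec. intros M. simpl. exists (Rabs M / d). intros x Hx.
      apply (Rmult_lt_compat_r d) in Hx; [|lra].
      unfold Rdiv in Hx. rewrite Rmult_assoc, Rinv_l, Rmult_1_r in Hx by lra.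
      pose proof (Rle_abs (-M)). rewrite Rabs_Ropp in H. lra.
    + simpl. exists 0. intros x _. discriminate.
Qed.

Lemma lim_sum {X} (L : list X) (f : R -> X -> R) (l : X -> R) :
  (forall x, In x L -> is_lim (fun a => f a x) p_infty (l x)) ->
  is_lim (fun a => sumR (f a) L) p_infty (sumR l L).
Proof.
  induction L as [|x L IH]; intros H; simpl.
  - unfold sumR; simpl. apply is_lim_const.
  - unfold sumR in *. simpl.
    eapply is_lim_plus. apply H; simpl; auto. apply IH. intros; apply H; simpl; auto.
    constructor.
Qed.

Lemma lim_ratio {X} (L : list X) (A D : X -> R) (y : X) :
  (forall x, In x L -> 0 <= D x) -> 0 <= D y ->
  sumR (fun x => A x * ez (D x)) L <> 0 ->
  forall eps, eps > 0 -> exists M : R, forall alpha, alpha > M ->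
    Rabs (A y * exp (- (alpha * D y)) / sumR (fun x => A x * exp (- (alpha * D x))) L
          - A y * ez (D y) / sumR (fun x => A x * ez (D x)) L) < eps.
Proof.
  intros HD HDy HS eps Heps.
  assert (Hl : is_lim (fun a => A y * exp (- (a * D y)) / sumR (fun x => A x * exp (- (a * D x))) L)
                 p_infty (A y * ez (D y) / sumR (fun x => A x * ez (D x)) L)).
  { apply (is_lim_div _ _ p_infty (A y * ez (D y)) (sumR (fun x => A x * ez (D x)) L)).
    - apply (is_lim_scal_l _ (A y) p_infty (ez (D y))). apply lim_exp_neg; auto.
    - apply (lim_sum L (fun a x => A x * exp (- (a * D x))) (fun x => A x * ez (D x))).
      intros x Hx. apply (is_lim_scal_l _ (A x) p_infty (ez (D x))). apply lim_exp_neg; auto.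
    - intro E. apply HS. injection E. auto.
    - simpl. auto. }
  apply is_lim_spec in Hl. specialize (Hl (mkposreal eps Heps)). simpl in Hl.
  destruct Hl as [M HM]. exists M. intros a Ha. apply HM. lra.
Qed.

Lemma sumR_nil {A} (f : A -> R) : sumR f [] = 0. Proof. reflexivity. Qed.
Lemma sumR_cons {A} (f : A -> R) x l : sumR f (x :: l) = f x + sumR f l. Proof. reflexivity. Qed.
Lemma prodR_nil {A} (f : A -> R) : prodR f [] = 1. Proof. reflexivity. Qed.
Lemma prodR_cons {A} (f : A -> R) x l : prodR f (x :: l) = f x * prodR f l. Proof. reflexivity. Qed.

Lemma sumR_app {A} (f : A -> R) l1 l2 : sumR f (l1 ++ l2) = sumR f l1 + sumR f l2.
Proof. induction l1; simpl; rewrite ?sumR_cons, ?sumR_nil; [ring|]. rewrite IHl1; ring. Qed.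
Lemma prodR_app {A} (f : A -> R) l1 l2 : prodR f (l1 ++ l2) = prodR f l1 * prodR f l2.
Proof. induction l1; simpl; rewrite ?prodR_cons, ?prodR_nil; [ring|]. rewrite IHl1; ring. Qed.

Lemma sumR_ext_in {A} (f g : A -> R) l : (forall x, In x l -> f x = g x) -> sumR f l = sumR g l.
Proof. induction l; intros H; auto. rewrite !sumR_cons, H, IHl; simpl; auto. intros; apply H; simpl; auto. Qed.
Lemma prodR_ext_in {A} (f g : A -> R) l : (forall x, In x l -> f x = g x) -> prodR f l = prodR g l.
Proof. induction l; intros H; auto. rewrite !prodR_cons, H, IHl; simpl; auto. intros; apply H; simpl; auto. Qed.

Lemma sumR_flat_map {A B} (f : B -> R) (g : A -> list B) l :
  sumR f (flat_map g l) = sumR (fun x => sumR f (g x)) l.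
Proof. induction l; auto. simpl. rewrite sumR_app, sumR_cons, IHl. reflexivity. Qed.
Lemma prodR_flat_map {A B} (f : B -> R) (g : A -> list B) l :
  prodR f (flat_map g l) = prodR (fun x => prodR f (g x)) l.
Proof. induction l; auto. simpl. rewrite prodR_app, prodR_cons, IHl. reflexivity. Qed.
Lemma prodR_map {A B} (f : B -> R) (g : A -> B) l : prodR f (map g l) = prodR (fun x => f (g x)) l.
Proof. induction l; auto. simpl. rewrite !prodR_cons, IHl. reflexivity. Qed.

Lemma sumR_filter {A} (f : A -> R) (P : A -> bool) l :
  sumR f (filter P l) = sumR (fun x => if P x then f x else 0) l.
Proof. induction l; auto. simpl. rewrite (sumR_cons _ a). destruct (P a); rewrite ?sumR_cons, IHl; ring. Qed.

Lemma sumR_plus {A} (f g : A -> R) l : sumR (fun x => f x + g x) l = sumR f l + sumR g l.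
Proof. induction l; simpl; rewrite ?sumR_cons, ?sumR_nil; [ring|]. rewrite IHl; ring. Qed.
Lemma sumR_scal {A} (c : R) (f : A -> R) l : sumR (fun x => c * f x) l = c * sumR f l.
Proof. induction l; simpl; rewrite ?sumR_cons, ?sumR_nil; [ring|]. rewrite IHl; ring. Qed.
Lemma sumR_scal_r {A} (c : R) (f : A -> R) l : sumR (fun x => f x * c) l = sumR f l * c.
Proof. induction l; simpl; rewrite ?sumR_cons, ?sumR_nil; [ring|]. rewrite IHl; ring. Qed.
Lemma prodR_mult {A} (f g : A -> R) l : prodR (fun x => f x * g x) l = prodR f l * prodR g l.
Proof. induction l; simpl; rewrite ?prodR_cons, ?prodR_nil; [ring|]. rewrite IHl; ring. Qed.
Lemma prodR_one {A} (l : list A) : prodR (fun _ => 1) l = 1.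
Proof. induction l; simpl; auto. rewrite prodR_cons, IHl; ring. Qed.

Lemma exp_sumR {A} (f : A -> R) l : exp (sumR f l) = prodR (fun x => exp (f x)) l.
Proof. induction l; simpl. apply exp_0. rewrite sumR_cons, prodR_cons, exp_plus, IHl. reflexivity. Qed.

Lemma prodR_zero {A} (f : A -> R) l x : In x l -> f x = 0 -> prodR f l = 0.
Proof. induction l; simpl; intros H Hf; [contradiction|]. rewrite prodR_cons.
  destruct H as [<-|H]. rewrite Hf; ring. rewrite IHl; auto; ring. Qed.

Lemma prodR_nz {A} (f : A -> R) l x : In x l -> prodR f l <> 0 -> f x <> 0.
Proof. intros H N E. apply N. eapply prodR_zero; eauto. Qed.

Lemma prodR_pos {A} (f : A -> R) l : (forall x, In x l -> 0 < f x) -> 0 < prodR f l.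
Proof. induction l; simpl; intros H. rewrite prodR_nil; lra.
  rewrite prodR_cons. apply Rmult_lt_0_compat; auto. Qed.

Lemma sumR_nonneg {A} (f : A -> R) l : (forall x, In x l -> 0 <= f x) -> 0 <= sumR f l.
Proof. induction l; simpl; intros H. rewrite sumR_nil; lra.
  rewrite sumR_cons. pose proof (H a (or_introl eq_refl)). pose proof (IHl (fun x h => H x (or_intror h))). lra. Qed.

Lemma sumR_zero_iff {A} (f : A -> R) l : (forall x, In x l -> 0 <= f x) ->
  (sumR f l = 0 <-> forall x, In x l -> f x = 0).
Proof.
  induction l; simpl; intros H. split; auto. intros _ x [].
  rewrite sumR_cons.
  assert (H1 := H a (or_introl eq_refl)).
  assert (H2 := sumR_nonneg f l (fun x h => H x (or_intror h))).
  specialize (IHl (fun x h => H x (or_intror h))).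
  split.
  - intros E x [<-|Hx]. lra. apply IHl; auto. lra.
  - intros Z. rewrite (Z a (or_introl eq_refl)). rewrite (proj2 IHl). ring. auto.
Qed.

Lemma prodR_single {A} (f : A -> R) l x0 :
  NoDup l -> In x0 l -> (forall x, In x l -> x <> x0 -> f x = 1) -> prodR f l = f x0.
Proof.
  induction l as [|a l IH]; intros ND Hin H; [destruct Hin|].
  inversion ND; subst. rewrite prodR_cons. destruct Hin as [<-|Hin].
  - rewrite (prodR_ext_in f (fun _ => 1)), prodR_one. ring.
    intros x Hx. apply H. simpl; auto. intros ->. contradiction.
  - rewrite IH; auto. rewrite (H a). ring. simpl; auto. intros ->. contradiction.
    intros; apply H; simpl; auto.
Qed.

Lemma NoDup_flat_map {A B} (f : A -> list B) l :
  NoDup l -> (forall x, In x l -> NoDup (f x)) ->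
  (forall x y b, In x l -> In y l -> x <> y -> In b (f x) -> ~ In b (f y)) ->
  NoDup (flat_map f l).
Proof.
  induction l as [|a l IH]; intros ND H1 H2; simpl. constructor.
  inversion ND; subst. apply NoDup_app. apply H1; simpl; auto.
  apply IH; auto. intros; apply H1; simpl; auto. intros x y b0 ? ? ?; apply H2; simpl; auto.
  intros b Hb Hb'. apply in_flat_map in Hb'. destruct Hb' as [y [Hy Hby]].
  apply (H2 a y b); simpl; auto. intros ->. contradiction.
Qed.

Lemma NoDup_map_inj {A B} (f : A -> B) l : (forall x y, f x = f y -> x = y) -> NoDup l -> NoDup (map f l).
Proof. intros Hi; induction 1; simpl; constructor; auto.
  intros Hm. apply in_map_iff in Hm. destruct Hm as [y [E Hy]]. apply Hi in E. subst. contradiction. Qed.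

Lemma Perm_flat_map_rev {A B} (f : A -> list B) l : Permutation (flat_map f l) (flat_map f (rev l)).
Proof.
  induction l; simpl. constructor. rewrite flat_map_app. simpl. rewrite app_nil_r.
  eapply perm_trans. apply Permutation_app_head. apply IHl. apply Permutation_app_comm.
Qed.

Fixpoint interpsB (b : interp) (sg : list atom) : list interp :=
  match sg with
  | [] => [b]
  | a :: l => flat_map (fun f => [upd f a false; upd f a true]) (interpsB b l)
  end.

Lemma interps_B sg : interps sg = interpsB (fun _ => false) sg.
Proof. induction sg; simpl; auto. rewrite IHsg. reflexivity. Qed.

Lemma upd_eq f a b : upd f a b a = b.
Proof. unfold upd, atom_eqb. destruct (atom_eq_dec a a); congruence. Qed.
Lemma upd_neq f a b x : x <> a -> upd f a b x = f x.
Proof. intros H. unfold upd, atom_eqb. destruct (atom_eq_dec x a); congruence. Qed.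
Lemma upd_comm f a a' x y : a <> a' -> upd (upd f a x) a' y = upd (upd f a' y) a x.
Proof. intros H. apply functional_extensionality. intros z. unfold upd, atom_eqb.
  destruct (atom_eq_dec z a'), (atom_eq_dec z a); congruence. Qed.
Lemma upd_same f a : upd f a (f a) = f.
Proof. apply functional_extensionality. intros z. unfold upd, atom_eqb.
  destruct (atom_eq_dec z a); congruence. Qed.

Lemma sum_interps_cons (G : interp -> R) b a l :
  sumR G (interpsB b (a :: l)) = sumR (fun h => G (upd h a false) + G (upd h a true)) (interpsB b l).
Proof. simpl. rewrite sumR_flat_map. apply sumR_ext_in. intros x _.
  rewrite !sumR_cons, sumR_nil. ring. Qed.

Lemma sum_interps_app l1 : forall (G : interp -> R) b l2,
  sumR G (interpsB b (l1 ++ l2)) = sumR (fun f => sumR G (interpsB f l1)) (interpsB b l2).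
Proof.
  induction l1 as [|a l1 IH]; intros G b l2.
  - simpl. apply sumR_ext_in. intros; rewrite sumR_cons, sumR_nil; ring.
  - rewrite <- app_comm_cons, sum_interps_cons, IH. apply sumR_ext_in. intros f _.
    rewrite sum_interps_cons. reflexivity.
Qed.

Lemma interpsB_agree l : forall f g, In g (interpsB f l) -> forall a, ~ In a l -> g a = f a.
Proof.
  induction l as [|c l IH]; simpl; intros f g H a Ha.
  - destruct H as [<-|[]]; auto.
  - apply in_flat_map in H. destruct H as [h [Hh Hg]].
    simpl in Hg. destruct Hg as [<-|[<-|[]]]; rewrite upd_neq by (intro; apply Ha; auto);
    apply (IH f h); auto.
Qed.



Lemma upd_upd f a x y : upd (upd f a x) a y = upd f a y.
Proof. apply functional_extensionality. intros z. unfold upd, atom_eqb.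
  destruct (atom_eq_dec z a); congruence. Qed.

Lemma interpsB_complete l : forall f g, (forall a, ~ In a l -> g a = f a) -> In g (interpsB f l).
Proof.
  induction l as [|c l IH]; simpl; intros f g H.
  - left. apply functional_extensionality. intros a. symmetry; apply H; auto.
  - apply in_flat_map. exists (upd g c (f c)). split.
    + apply IH. intros a Ha. destruct (atom_eq_dec a c) as [->|N].
      * rewrite upd_eq. auto.
      * rewrite upd_neq by auto. apply H. intros [E|E]; auto.
    + simpl. rewrite !upd_upd. destruct (g c) eqn:E; [right; left|left]; rewrite <- E; apply upd_same.
Qed.

Lemma sum_prod_interps (F : atom -> bool -> R) l : NoDup l -> forall b,
  sumR (fun J => prodR (fun a => F a (J a)) l) (interpsB b l) = prodR (fun a => F a false + F a true) l.
Proof.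
  induction 1 as [|a l Ha ND IH]; intros b.
  - simpl. rewrite sumR_cons, sumR_nil, !prodR_nil. ring.
  - rewrite sum_interps_cons, prodR_cons.
    rewrite (sumR_ext_in _ (fun h => (F a false + F a true) * prodR (fun a0 => F a0 (h a0)) l)).
    + rewrite sumR_scal, IH. reflexivity.
    + intros h _. rewrite !prodR_cons, !upd_eq.
      rewrite !(prodR_ext_in (fun a0 => F a0 (upd h a _ a0)) (fun a0 => F a0 (h a0))). ring.
      all: intros x Hx; rewrite upd_neq; auto; intros ->; contradiction.
Qed.

Lemma sum_interps_perm l l' : Permutation l l' -> NoDup l -> forall G b,
  sumR G (interpsB b l) = sumR G (interpsB b l').
Proof.
  induction 1 as [|x l l' P IH|x y l|l l' l'' P1 IH1 P2 IH2]; intros ND G b.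
  - reflexivity.
  - inversion ND; subst. rewrite !sum_interps_cons. apply IH; auto.
  - inversion ND; subst. inversion H2; subst.
    assert (xy : x <> y) by (intros ->; apply H1; simpl; auto).
    rewrite !sum_interps_cons. apply sumR_ext_in. intros h _.
    rewrite (upd_comm _ y x) by congruence. rewrite (upd_comm _ y x false true) by congruence.
    rewrite (upd_comm _ y x true false) by congruence. rewrite (upd_comm _ y x true true) by congruence.
    ring.
  - rewrite IH1 by auto. apply IH2. eapply Permutation_NoDup; eauto.
Qed.

Lemma in_all_assign k s : In s (all_assign k) <-> length s = k.
Proof.
  revert s; induction k; intros s; simpl.
  - split. intros [<-|[]]; auto. destruct s; simpl; try discriminate; auto.
  - rewrite in_flat_map. split.
    + intros [x [Hx Hs]]. apply IHk in Hx. simpl in Hs. destruct Hs as [<-|[<-|[]]]; simpl; auto.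
    + destruct s as [|b s]; simpl; intros H; try discriminate. injection H; intros H'.
      exists s. split. apply IHk; auto. destruct b; simpl; auto.
Qed.

Lemma NoDup_all_assign k : NoDup (all_assign k).
Proof.
  induction k; simpl. constructor; auto. constructor.
  apply NoDup_flat_map; auto.
  - intros x _. constructor. simpl. intros [E|[]]; discriminate. constructor; auto. constructor.
  - intros x y b _ _ N Hx Hy. simpl in *. destruct Hx as [<-|[<-|[]]]; destruct Hy as [E|[E|[]]];
    try discriminate; injection E; intros; subst; contradiction.
Qed.

Definition node (B : BN) (v : nat) : list atom :=
  AVar v :: map (APF v) (all_assign (length (bn_par B v))).

Lemma sig_node B : bn_sig B = flat_map (node B) (seq 0 (bn_n B)).
Proof. reflexivity. Qed.

Lemma NoDup_node B v : NoDup (node B v).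
Proof.
  constructor. intros H. apply in_map_iff in H. destruct H as [? [? _]]; discriminate.
  apply NoDup_map_inj. intros x y E; injection E; auto. apply NoDup_all_assign.
Qed.

Lemma in_node B v a : In a (node B v) <-> a = AVar v \/ exists s, length s = length (bn_par B v) /\ a = APF v s.
Proof.
  unfold node. simpl. rewrite in_map_iff. split.
  - intros [<-|[s [<- Hs]]]; auto. right. exists s. split; auto. apply in_all_assign; auto.
  - intros [->|[s [Hs ->]]]; auto. right. exists s; split; auto. apply in_all_assign; auto.
Qed.

Lemma NoDup_sig B : NoDup (bn_sig B).
Proof.
  rewrite sig_node. apply NoDup_flat_map. apply seq_NoDup. intros; apply NoDup_node.
  intros x y b _ _ N Hx Hy. apply in_node in Hx, Hy.
  destruct Hx as [->|[s [_ ->]]]; destruct Hy as [E|[s' [_ E]]]; try discriminate;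
  injection E; intros; subst; contradiction.
Qed.

Lemma in_sig B a : In a (bn_sig B) <->
  (exists v, (v < bn_n B)%nat /\ a = AVar v) \/
  (exists v s, (v < bn_n B)%nat /\ length s = length (bn_par B v) /\ a = APF v s).
Proof.
  rewrite sig_node, in_flat_map. split.
  - intros [v [Hv Ha]]. apply in_seq in Hv. apply in_node in Ha.
    destruct Ha as [->|[s [Hs ->]]]. left; exists v; split; auto; lia. right; exists v, s; split; auto; lia.
  - intros [[v [Hv ->]]|[v [s [Hv [Hs ->]]]]]; exists v; (split; [apply in_seq; lia|apply in_node]); auto.
    right; exists s; auto.
Qed.

Lemma in_translate B wr : In wr (translate B) <->
  exists v s, (v < bn_n B)%nat /\ length s = length (bn_par B v) /\
    (In wr (pf_rules v s (bn_cpt B v s)) \/ wr = (WAlpha, bn_rule B v s)).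
Proof.
  unfold translate. rewrite in_flat_map. split.
  - intros [v [Hv H]]. apply in_flat_map in H. destruct H as [s [Hs H]].
    apply in_seq in Hv. apply in_all_assign in Hs. exists v, s. split; [lia|split; auto].
    apply in_app_or in H. destruct H as [H|[H|[]]]; auto.
  - intros [v [s [Hv [Hs H]]]]. exists v. split. apply in_seq; lia.
    apply in_flat_map. exists s. split. apply in_all_assign; auto.
    apply in_or_app. destruct H as [H|H]; auto. right; left; auto.
Qed.

Definition Jpar (B : BN) (J : interp) (v : nat) : list bool := map (fun u => J (AVar u)) (bn_par B v).

Lemma combine_map {A C} (g : A -> C) l : combine l (map g l) = map (fun u => (u, g u)) l.
Proof. induction l; simpl; auto. rewrite IHl; auto. Qed.

Lemma forallb_eqb_combine {A} (g : A -> bool) l : forall s, length s = length l ->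
  (forallb (fun us => Bool.eqb (g (fst us)) (snd us)) (combine l s) = true <-> s = map g l).
Proof.
  induction l as [|u l IH]; intros [|b s] H; simpl in *; try discriminate; try (split; auto; fail).
  injection H; intros H'. rewrite andb_true_iff, IH by auto. split.
  - intros [E1 E2]. apply eqb_prop in E1. subst; auto.
  - intros E; injection E; intros; subst. split; auto. apply eqb_reflx.
Qed.

Lemma body_aux (J : interp) (C : list (nat * bool)) :
  forallb (fun a => J a) (map (fun us => AVar (fst us)) (filter (fun us => snd us) C)) &&
  forallb (fun a => negb (J a)) (map (fun us => AVar (fst us)) (filter (fun us => negb (snd us)) C))
  = forallb (fun us => Bool.eqb (J (AVar (fst us))) (snd us)) C.
Proof.
  induction C as [|[u b] C IH]; simpl; auto.
  destruct b; simpl; rewrite <- IH; destruct (J (AVar u)); simpl;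
    repeat match goal with |- context [forallb ?f ?l] => destruct (forallb f l) end; reflexivity.
Qed.

Lemma body_bn B J v s : length s = length (bn_par B v) ->
  (body_holds J (bn_rule B v s) = true <-> s = Jpar B J v /\ J (APF v s) = true).
Proof.
  intros Hs. unfold body_holds, bn_rule. simpl. rewrite forallb_app. simpl.
  assert (E : forall x y z : bool, (x && (y && true)) && z = (x && z) && y)
    by (intros [] [] []; reflexivity).
  rewrite E, body_aux, andb_true_iff. rewrite (forallb_eqb_combine (fun u => J (AVar u))) by auto. unfold Jpar. tauto.
Qed.

Lemma existsb_forallb_neg {A} (f : A -> bool) l : existsb f l = negb (forallb (fun a => negb (f a)) l).
Proof. induction l; simpl; auto. rewrite IHl. destruct (f a); reflexivity. Qed.

Lemma red_self J r : satb J r = true -> reduct_satb J J r = true.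
Proof.
  unfold satb, reduct_satb, body_holds. rewrite existsb_forallb_neg.
  destruct (forallb (fun a => negb (J a)) (rneg r)); simpl; auto. rewrite andb_true_r. auto.
Qed.

Lemma forallb_mono {A} (f g : A -> bool) l : (forall a, f a = true -> g a = true) ->
  forallb f l = true -> forallb g l = true.
Proof. intros H. rewrite !forallb_forall. auto. Qed.

Lemma red_mono I J K r : reduct_satb I J r = true -> (forall a, K a = true -> J a = true) ->
  head_holds K r = head_holds J r -> reduct_satb I K r = true.
Proof.
  unfold reduct_satb. destruct (existsb _ _); auto. intros H1 H2 H3.
  destruct (forallb (fun a => K a) (rpos r)) eqn:E; simpl; auto.
  rewrite H3. rewrite (forallb_mono _ (fun a => J a) _ H2 E) in H1. exact H1.
Qed.

Lemma stable_iff sg Pi J : stableb sg (unweight (sat_part Pi J)) J = true <->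
  (forall K, In K (interps sg) -> (forall a, In a sg -> K a = true -> J a = true) ->
     (forall wr, In wr Pi -> satb J (snd wr) = true -> reduct_satb J K (snd wr) = true) ->
     forall a, In a sg -> K a = J a).
Proof.
  unfold stableb. rewrite andb_true_iff.
  assert (H1 : forallb (satb J) (unweight (sat_part Pi J)) = true).
  { apply forallb_forall. intros r Hr. unfold unweight, sat_part in Hr.
    apply in_map_iff in Hr. destruct Hr as [wr [<- Hwr]]. apply filter_In in Hwr. tauto. }
  split.
  - intros [_ H] K HK Hsub Hred a Ha. rewrite forallb_forall in H. specialize (H K HK).
    unfold subb in H. rewrite implb_true_iff, andb_true_iff, !forallb_forall in H.
    unfold eqb_on in H. rewrite forallb_forall in H.
    apply eqb_prop. apply H; auto. split.
    + intros x Hx. specialize (Hsub x Hx). destruct (K x); simpl; auto.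
    + intros r Hr. unfold unweight, sat_part in Hr.
      apply in_map_iff in Hr. destruct Hr as [wr [<- Hwr]]. apply filter_In in Hwr.
      apply Hred; tauto.
  - intros H. split; auto. apply forallb_forall. intros K HK. apply implb_true_iff. rewrite andb_true_iff. intros [Hs Hr].
    unfold eqb_on. apply forallb_forall. intros a Ha. rewrite (H K HK). apply eqb_reflx. 3: exact Ha.
    + intros x Hx. unfold subb in Hs. rewrite forallb_forall in Hs. specialize (Hs x Hx).
      intros Kx. rewrite Kx in Hs. exact Hs.
    + intros wr Hwr Hs'. rewrite forallb_forall in Hr. apply Hr.
      unfold unweight, sat_part. apply in_map. apply filter_In; auto.
Qed.

Definition consP (B : BN) (J : interp) : Prop :=
  forall v, (v < bn_n B)%nat -> J (AVar v) = J (APF v (Jpar B J v)).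

Definition pfc (B : BN) (J : interp) : Prop :=
  forall v s, (v < bn_n B)%nat -> length s = length (bn_par B v) ->
    if Rlt_dec 0 (bn_cpt B v s) then
      (if Rlt_dec (bn_cpt B v s) 1 then True else J (APF v s) = true)
    else J (APF v s) = false.

Definition allhard (B : BN) (J : interp) : Prop :=
  forall wr, In wr (translate B) -> fst wr = WAlpha -> satb J (snd wr) = true.

Lemma Jpar_length B J v : length (Jpar B J v) = length (bn_par B v).
Proof. unfold Jpar. apply length_map. Qed.

Lemma fact_in B v s : (v < bn_n B)%nat -> length s = length (bn_par B v) -> 0 < bn_cpt B v s ->
  exists w, In (w, mkRule (Some (APF v s)) [] []) (translate B).
Proof.
  intros Hv Hs Hp. unfold pf_rules.
  destruct (Rlt_dec (bn_cpt B v s) 1) as [h|h].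
  - exists (WReal (ln (bn_cpt B v s / (1 - bn_cpt B v s)))). apply in_translate.
    exists v, s. repeat split; auto. left. unfold pf_rules.
    destruct (Rlt_dec 0 (bn_cpt B v s)); [|contradiction]. destruct (Rlt_dec (bn_cpt B v s) 1); [|contradiction].
    left; auto.
  - exists WAlpha. apply in_translate.
    exists v, s. repeat split; auto. left. unfold pf_rules.
    destruct (Rlt_dec 0 (bn_cpt B v s)); [|contradiction]. destruct (Rlt_dec (bn_cpt B v s) 1); [contradiction|].
    left; auto.
Qed.

Lemma bn_in B v s : (v < bn_n B)%nat -> length s = length (bn_par B v) ->
  In (WAlpha, bn_rule B v s) (translate B).
Proof. intros. apply in_translate. exists v, s. auto. Qed.

Lemma suff B J : bn_wf B -> consP B J -> pfc B J ->
  allhard B J /\ stableb (bn_sig B) (unweight (sat_part (translate B) J)) J = true.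
Proof.
  intros HB Hc Hp. split.
  - intros wr Hwr Ha. apply in_translate in Hwr. destruct Hwr as [v [s [Hv [Hs [Hpf| ->]]]]].
    + specialize (Hp v s Hv Hs). unfold pf_rules in Hpf.
      destruct (Rlt_dec 0 (bn_cpt B v s)); [destruct (Rlt_dec (bn_cpt B v s) 1)|];
        destruct Hpf as [<-|[]]; simpl in Ha; try discriminate;
        unfold satb, body_holds, head_holds; simpl; rewrite Hp; reflexivity.
    + simpl. unfold satb. destruct (body_holds J (bn_rule B v s)) eqn:E; [|reflexivity].
      apply body_bn in E; auto. destruct E as [E1 E2]. unfold head_holds. simpl.
      rewrite (Hc v Hv), <- E1, E2. reflexivity.
  - apply stable_iff. intros K HK Hsub Hred.
    assert (PFc : forall v s, (v < bn_n B)%nat -> length s = length (bn_par B v) ->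
                   J (APF v s) = true -> K (APF v s) = true).
    { intros v s Hv Hs HJ. specialize (Hp v s Hv Hs).
      destruct (Rlt_dec 0 (bn_cpt B v s)) as [h|h]; [|congruence].
      destruct (fact_in B v s Hv Hs h) as [w Hw].
      specialize (Hred _ Hw). simpl in Hred. unfold satb, body_holds, head_holds in Hred. simpl in Hred.
      rewrite HJ in Hred. specialize (Hred eq_refl). unfold reduct_satb, head_holds in Hred. simpl in Hred.
      exact Hred. }
    assert (AVc : forall v, (v < bn_n B)%nat -> J (AVar v) = true -> K (AVar v) = true).
    { intros v. induction v as [v IH] using lt_wf_ind. intros Hv HJ.
      set (s0 := Jpar B J v).
      assert (Hs0 : length s0 = length (bn_par B v)) by apply Jpar_length.
      assert (HPF : J (APF v s0) = true) by (unfold s0; rewrite <- (Hc v Hv); auto).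
      assert (Hbody : body_holds J (bn_rule B v s0) = true) by (apply body_bn; auto).
      specialize (Hred _ (bn_in B v s0 Hv Hs0)). simpl in Hred.
      unfold satb, head_holds in Hred. simpl in Hred. rewrite HJ, implb_true_r in Hred.
      specialize (Hred eq_refl).
      unfold reduct_satb in Hred. rewrite existsb_forallb_neg in Hred.
      unfold body_holds in Hbody. apply andb_true_iff in Hbody. destruct Hbody as [Hpos Hneg].
      rewrite Hneg in Hred. simpl in Hred. unfold head_holds in Hred. simpl in Hred.
      assert (Hposk : forallb (fun a => K a) (rpos (bn_rule B v s0)) = true).
      { apply forallb_forall. intros a Ha. simpl in Ha. apply in_app_or in Ha. destruct Ha as [Ha|[<-|[]]].
        - apply in_map_iff in Ha. destruct Ha as [[u b] [<- Hub]]. apply filter_In in Hub.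
          destruct Hub as [Hub Hb]. simpl in Hb. subst b. unfold s0, Jpar in Hub.
          rewrite combine_map in Hub. apply in_map_iff in Hub. destruct Hub as [u' [E Hu']].
          injection E; intros E1 E2; subst u'. simpl.
          destruct (HB v Hv) as [_ [Hlt _]]. specialize (Hlt u Hu').
          apply IH; auto. lia.
        - apply PFc; auto. }
      simpl in Hposk. rewrite Hposk in Hred. exact Hred. }
    intros a Ha. apply in_sig in Ha.
    destruct (J a) eqn:EJ.
    + destruct Ha as [[v [Hv ->]]|[v [s [Hv [Hs ->]]]]]; [apply AVc|apply PFc]; auto.
    + destruct (K a) eqn:EK; auto. rewrite <- EJ. symmetry. apply Hsub; auto. apply in_sig. auto.
Qed.

Lemma in_interps_zero sg J : In J (interps sg) -> forall a, ~ In a sg -> J a = false.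
Proof. rewrite interps_B. intros H a Ha. apply (interpsB_agree sg _ _ H a Ha). Qed.

Lemma nec B J : bn_wf B -> In J (interps (bn_sig B)) -> allhard B J ->
  stableb (bn_sig B) (unweight (sat_part (translate B) J)) J = true -> consP B J /\ pfc B J.
Proof.
  intros HB HJ Hh Hst. split.
  - intros v Hv. set (s0 := Jpar B J v).
    assert (Hs0 : length s0 = length (bn_par B v)) by apply Jpar_length.
    destruct (J (APF v s0)) eqn:E.
    + specialize (Hh _ (bn_in B v s0 Hv Hs0) eq_refl). simpl in Hh.
      unfold satb in Hh. assert (Hb : body_holds J (bn_rule B v s0) = true) by (apply body_bn; auto).
      rewrite Hb in Hh. unfold head_holds in Hh. simpl in Hh. exact Hh.
    + destruct (J (AVar v)) eqn:EA; [|reflexivity]. exfalso.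
      set (K := upd J (AVar v) false).
      rewrite stable_iff in Hst.
      assert (HKv : K (AVar v) = J (AVar v)).
      { apply Hst.
        - rewrite interps_B. apply interpsB_complete. intros a Ha.
          unfold K. destruct (atom_eq_dec a (AVar v)) as [->|N]. apply upd_eq.
          rewrite upd_neq by auto. apply (in_interps_zero _ _ HJ a Ha).
        - intros a _. unfold K. destruct (atom_eq_dec a (AVar v)) as [->|N].
          rewrite upd_eq; discriminate. rewrite upd_neq by auto. auto.
        - intros wr Hwr Hs. apply red_self in Hs.
          assert (Hmono : forall a, K a = true -> J a = true).
          { intros a. unfold K. destruct (atom_eq_dec a (AVar v)) as [->|N].
            rewrite upd_eq; discriminate. rewrite upd_neq by auto. auto. }
          apply in_translate in Hwr. destruct Hwr as [v' [s [Hv' [Hs' [Hpf| ->]]]]].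
          + apply (red_mono _ J); auto. unfold pf_rules in Hpf.
            destruct (Rlt_dec 0 (bn_cpt B v' s)); [destruct (Rlt_dec (bn_cpt B v' s) 1)|];
              destruct Hpf as [<-|[]]; unfold head_holds; simpl; auto;
              unfold K; rewrite upd_neq; auto; discriminate.
          + simpl in *. destruct (Nat.eq_dec v' v) as [->|N].
            * unfold reduct_satb. destruct (existsb (fun a => J a) (rneg (bn_rule B v s))) eqn:Eneg; auto.
              destruct (forallb (fun a => K a) (rpos (bn_rule B v s))) eqn:Epos; auto.
              exfalso.
              assert (Hb : body_holds J (bn_rule B v s) = true).
              { unfold body_holds. rewrite (forallb_mono _ (fun a => J a) _ Hmono Epos).
                rewrite existsb_forallb_neg in Eneg. destruct (forallb _ _); auto. }
              apply body_bn in Hb; auto. destruct Hb as [-> Hb]. fold s0 in Hb. congruence.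
            * apply (red_mono _ J); auto. unfold head_holds; simpl.
              unfold K; rewrite upd_neq; auto. intros E'; injection E'; auto.
        - apply in_sig. left. exists v; auto. }
      unfold K in HKv. rewrite upd_eq in HKv. congruence.
  - intros v s Hv Hs.
    destruct (Rlt_dec 0 (bn_cpt B v s)) as [h1|h1]; [destruct (Rlt_dec (bn_cpt B v s) 1) as [h2|h2]|]; auto.
    + assert (Hin : In (WAlpha, mkRule (Some (APF v s)) [] []) (translate B)).
      { apply in_translate. exists v, s. repeat split; auto. left. unfold pf_rules.
        destruct (Rlt_dec 0 (bn_cpt B v s)); [|contradiction].
        destruct (Rlt_dec (bn_cpt B v s) 1); [contradiction|]. left; auto. }
      specialize (Hh _ Hin eq_refl). exact Hh.
    + assert (Hin : In (WAlpha, mkRule None [APF v s] []) (translate B)).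
      { apply in_translate. exists v, s. repeat split; auto. left. unfold pf_rules.
        destruct (Rlt_dec 0 (bn_cpt B v s)); [contradiction|]. left; auto. }
      specialize (Hh _ Hin eq_refl). unfold satb, body_holds, head_holds in Hh. simpl in Hh.
      destruct (J (APF v s)); auto.
Qed.

Definition hp (B : BN) v s (b : bool) : R := if b then bn_cpt B v s else 1 - bn_cpt B v s.
Definition indb (b : bool) : R := if b then 1 else 0.
Definition nf (B : BN) (J : interp) v : R :=
  indb (Bool.eqb (J (AVar v)) (J (APF v (Jpar B J v)))) *
  prodR (fun s => hp B v s (J (APF v s))) (all_assign (length (bn_par B v))).
Definition Pp (B : BN) (J : interp) : R := prodR (nf B J) (seq 0 (bn_n B)).

Definition Cvs (B : BN) v s : R :=
  if Rlt_dec 0 (bn_cpt B v s) then (if Rlt_dec (bn_cpt B v s) 1 then / (1 - bn_cpt B v s) else 1) else 1.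
Definition CC (B : BN) : R :=
  prodR (fun v => prodR (fun s => Cvs B v s) (all_assign (length (bn_par B v)))) (seq 0 (bn_n B)).

Definition isA (w : weight) : R := match w with WAlpha => 1 | _ => 0 end.
Definition re (w : weight) : R := match w with WReal x => x | _ => 0 end.
Definition Nh B := sumR (fun wr : weight * rule => isA (fst wr)) (translate B).
Definition Dd B J := sumR (fun wr : weight * rule => if satb J (snd wr) then 0 else isA (fst wr)) (translate B).
Definition cc B J := sumR (fun wr : weight * rule => if satb J (snd wr) then re (fst wr) else 0) (translate B).
Definition Aa B J := if stableb (bn_sig B) (unweight (sat_part (translate B) J)) J then exp (cc B J) else 0.

Lemma Wt_decomp B alpha J :
  Wt (bn_sig B) (translate B) alpha J = exp (alpha * Nh B) * (Aa B J * exp (- (alpha * Dd B J))).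
Proof.
  unfold Wt, Aa. destruct (stableb _ _ _); [|ring].
  assert (E : sumR (fun wr => wval alpha (fst wr)) (sat_part (translate B) J) =
              alpha * Nh B + cc B J + - (alpha * Dd B J)).
  { unfold sat_part. rewrite sumR_filter. unfold Nh, cc, Dd.
    rewrite (sumR_ext_in _ (fun wr : weight * rule => alpha * isA (fst wr) + (if satb J (snd wr) then re (fst wr) else 0)
       + (- alpha) * (if satb J (snd wr) then 0 else isA (fst wr)))).
    rewrite !sumR_plus, !sumR_scal. ring.
    intros [w r] _. simpl. destruct (satb J r); destruct w; simpl; ring. }
  rewrite E, !exp_plus. ring.
Qed.

Lemma isA_nonneg w : 0 <= isA w. Proof. destruct w; simpl; lra. Qed.

Lemma Dd_nonneg B J : 0 <= Dd B J.
Proof. apply sumR_nonneg. intros x _. destruct (satb _ _). lra. apply isA_nonneg. Qed.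

Lemma Dd_zero B J : Dd B J = 0 <-> allhard B J.
Proof.
  unfold Dd. rewrite sumR_zero_iff.
  2: { intros x _. destruct (satb _ _). lra. apply isA_nonneg. }
  split.
  - intros H wr Hwr Ha. specialize (H wr Hwr). rewrite Ha in H. simpl in H.
    destruct (satb _ _); auto. lra.
  - intros H wr Hwr. destruct (satb J (snd wr)) eqn:E; auto.
    destruct (fst wr) eqn:Ew; simpl; auto. rewrite H in E; auto. discriminate.
Qed.

Lemma cpt_range B v s : bn_wf B -> (v < bn_n B)%nat -> length s = length (bn_par B v) ->
  0 <= bn_cpt B v s <= 1.
Proof. intros HB Hv Hs. destruct (HB v Hv) as [_ [_ H]]. auto. Qed.

Lemma Pp_nz B J : bn_wf B -> Pp B J <> 0 -> consP B J /\ pfc B J.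
Proof.
  intros HB H. unfold Pp in H.
  assert (Hv : forall v, (v < bn_n B)%nat -> nf B J v <> 0).
  { intros v Hv. apply (prodR_nz _ _ _ (proj2 (in_seq _ _ _) (conj (Nat.le_0_l v) Hv)) H). }
  split.
  - intros v Hvn. specialize (Hv v Hvn). unfold nf, indb in Hv.
    destruct (Bool.eqb _ _) eqn:E. apply eqb_prop; auto. exfalso; apply Hv; ring.
  - intros v s Hvn Hs. specialize (Hv v Hvn). unfold nf in Hv.
    assert (Hp : prodR (fun s => hp B v s (J (APF v s))) (all_assign (length (bn_par B v))) <> 0).
    { intros E; apply Hv; rewrite E; ring. }
    assert (Hs' : In s (all_assign (length (bn_par B v)))) by (apply in_all_assign; auto).
    pose proof (prodR_nz _ _ _ Hs' Hp) as Hh. unfold hp in Hh.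
    pose proof (cpt_range B v s HB Hvn Hs).
    destruct (Rlt_dec 0 (bn_cpt B v s)); [destruct (Rlt_dec (bn_cpt B v s) 1)|]; auto;
      destruct (J (APF v s)); auto; exfalso; apply Hh; lra.
Qed.

Lemma exp_cc B J : bn_wf B -> consP B J -> pfc B J -> exp (cc B J) = CC B * Pp B J.
Proof.
  intros HB Hc Hp. unfold cc, translate, CC, Pp.
  rewrite sumR_flat_map, exp_sumR, <- prodR_mult. apply prodR_ext_in. intros v Hv.
  apply in_seq in Hv. assert (Hvn : (v < bn_n B)%nat) by lia.
  rewrite sumR_flat_map, exp_sumR. unfold nf.
  rewrite (Hc v Hvn), eqb_reflx. unfold indb. rewrite Rmult_1_l, <- prodR_mult.
  apply prodR_ext_in. intros s Hs. apply in_all_assign in Hs.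
  specialize (Hp v s Hvn Hs). pose proof (cpt_range B v s HB Hvn Hs).
  rewrite sumR_app, sumR_cons, sumR_nil. simpl.
  destruct (satb J (bn_rule B v s)); simpl.
  all: unfold pf_rules, Cvs, hp; destruct (Rlt_dec 0 (bn_cpt B v s)); [destruct (Rlt_dec (bn_cpt B v s) 1)|].
  all: rewrite ?sumR_cons, ?sumR_nil; simpl.
  all: unfold satb, body_holds, head_holds; simpl.
  all: destruct (J (APF v s)); simpl.
  all: rewrite ?Rplus_0_r, ?Rplus_0_l, ?exp_0; try (field; lra).
  all: try (rewrite exp_ln; [field; lra| apply Rdiv_lt_0_compat; lra]).
  all: try discriminate.
  all: lra.
Qed.

Lemma nf_agree B J g v : g (AVar v) = J (AVar v) -> (forall s, g (APF v s) = J (APF v s)) ->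
  (forall u, In u (bn_par B v) -> g (AVar u) = J (AVar u)) -> nf B g v = nf B J v.
Proof.
  intros H1 H2 H3. unfold nf, Jpar.
  rewrite (map_ext_in (fun u => g (AVar u)) (fun u => J (AVar u))) by auto.
  rewrite H1, H2. f_equal. apply prodR_ext_in. intros s _. rewrite H2. reflexivity.
Qed.

Definition FP (B : BN) (a : atom) (b : bool) : R := match a with APF v s => hp B v s b | _ => 1 end.

Lemma sum_node B f m : bn_wf B -> (m < bn_n B)%nat ->
  sumR (fun g => nf B g m) (interpsB f (node B m)) = 1.
Proof.
  intros HB Hm. unfold node. rewrite sum_interps_cons.
  destruct (HB m Hm) as [_ [Hlt _]].
  rewrite (sumR_ext_in _ (fun h => prodR (fun a => FP B a (h a))
                                        (map (APF m) (all_assign (length (bn_par B m)))))).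
  - rewrite sum_prod_interps. rewrite prodR_map.
    rewrite (prodR_ext_in _ (fun _ => 1)). apply prodR_one. intros s _. unfold FP, hp. ring.
    apply NoDup_map_inj. intros x y E; injection E; auto. apply NoDup_all_assign.
  - intros h _. rewrite prodR_map.
    assert (E : forall b, nf B (upd h (AVar m) b) m =
              indb (Bool.eqb b (h (APF m (Jpar B h m)))) *
              prodR (fun s => hp B m s (h (APF m s))) (all_assign (length (bn_par B m)))).
    { intros b. unfold nf. rewrite upd_eq. unfold Jpar.
      rewrite (map_ext_in (fun u => upd h (AVar m) b (AVar u)) (fun u => h (AVar u))).
      rewrite upd_neq by discriminate. apply Rmult_eq_compat_l. apply prodR_ext_in. intros s _.
      rewrite upd_neq by discriminate. reflexivity.
      intros u Hu. rewrite upd_neq. auto. intros E; injection E; intros Eu. rewrite Eu in Hu. specialize (Hlt m Hu). lia. }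
    rewrite !E. unfold indb. destruct (h (APF m (Jpar B h m))); simpl; ring.
Qed.

Lemma not_in_node B m a : (forall v, a = AVar v -> v <> m) -> (forall v s, a = APF v s -> v <> m) ->
  ~ In a (node B m).
Proof.
  intros H1 H2 H. apply in_node in H. destruct H as [->|[s [_ ->]]].
  apply (H1 m); auto. apply (H2 m s); auto.
Qed.

Lemma total_aux B : bn_wf B -> forall m, (m <= bn_n B)%nat -> forall base,
  sumR (fun J => prodR (nf B J) (seq 0 m)) (interpsB base (flat_map (node B) (rev (seq 0 m)))) = 1.
Proof.
  intros HB m. induction m as [|m IH]; intros Hm base.
  - simpl. rewrite sumR_cons, sumR_nil, prodR_nil. ring.
  - rewrite seq_S, rev_app_distr. change (rev [(0 + m)%nat]) with [m]. change (flat_map (node B) ([m] ++ rev (seq 0 m))) with (node B m ++ flat_map (node B) (rev (seq 0 m))).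
    rewrite sum_interps_app.
    rewrite <- (IH ltac:(lia) base). apply sumR_ext_in. intros f _.
    rewrite (sumR_ext_in _ (fun g => prodR (nf B f) (seq 0 m) * nf B g m)).
    + rewrite sumR_scal, sum_node by (auto; lia). ring.
    + intros g Hg. rewrite prodR_app, prodR_cons, prodR_nil, Rmult_1_r. f_equal.
      apply prodR_ext_in. intros v Hv. apply in_seq in Hv.
      assert (Hvn : (v < bn_n B)%nat) by lia.
      destruct (HB v Hvn) as [_ [Hlt _]].
      apply nf_agree.
      * apply (interpsB_agree _ _ _ Hg). apply not_in_node; [intros v0 E; injection E; intros; lia | intros v0 s0 E; discriminate].
      * intros s. apply (interpsB_agree _ _ _ Hg). apply not_in_node; [intros v0 E; discriminate | intros v0 s0 E; injection E; intros; lia].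
      * intros u Hu. specialize (Hlt u Hu). apply (interpsB_agree _ _ _ Hg).
        apply not_in_node; [intros v0 E; injection E; intros; lia | intros v0 s0 E; discriminate].
Qed.

Lemma total B : bn_wf B -> sumR (Pp B) (interps (bn_sig B)) = 1.
Proof.
  intros HB. rewrite interps_B.
  rewrite (sum_interps_perm _ (flat_map (node B) (rev (seq 0 (bn_n B))))).
  - apply total_aux; auto.
  - rewrite sig_node. apply Perm_flat_map_rev.
  - apply NoDup_sig.
Qed.

Definition FI (B : BN) (I : nat -> bool) (a : atom) (b : bool) : R :=
  match a with
  | AVar v => indb (Bool.eqb b (I v))
  | APF v s => hp B v s b *
      (if list_eq_dec bool_dec s (map I (bn_par B v)) then indb (Bool.eqb b (I v)) else 1)
  end.

Lemma forallb_false_ex {A} (f : A -> bool) l : forallb f l = false -> exists x, In x l /\ f x = false.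
Proof.
  induction l; simpl; intros H. discriminate.
  destruct (f a) eqn:E. destruct (IHl H) as [x [Hx Hf]]. exists x; auto. exists a; auto.
Qed.

Lemma prod_g B I v : 
  prodR (fun s => if list_eq_dec bool_dec s (map I (bn_par B v)) then indb (Bool.eqb (I v) (I v)) else 1)
    (all_assign (length (bn_par B v))) = 1.
Proof.
  rewrite (prodR_ext_in _ (fun _ => 1)). apply prodR_one. intros s _.
  destruct (list_eq_dec _ _ _); auto. rewrite eqb_reflx. reflexivity.
Qed.

Lemma pointwise B I J : bn_wf B ->
  indb (restricts_to B J I) * Pp B J = prodR (fun a => FI B I a (J a)) (bn_sig B).
Proof.
  intros HB. rewrite sig_node, prodR_flat_map. unfold node.
  destruct (restricts_to B J I) eqn:R.
  - unfold indb at 1. rewrite Rmult_1_l. unfold Pp. apply prodR_ext_in. intros v Hv.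
    unfold restricts_to in R. rewrite forallb_forall in R. pose proof (R v Hv) as Rv.
    apply eqb_prop in Rv. apply in_seq in Hv. assert (Hvn : (v < bn_n B)%nat) by lia.
    destruct (HB v Hvn) as [_ [Hlt _]].
    assert (EJ : Jpar B J v = map I (bn_par B v)).
    { unfold Jpar. apply map_ext_in. intros u Hu. specialize (Hlt u Hu).
      assert (Hu' : In u (seq 0 (bn_n B))) by (apply in_seq; lia).
      apply eqb_prop. apply R; auto. }
    rewrite prodR_cons, prodR_map. simpl FI. rewrite Rv, eqb_reflx. unfold indb at 2. rewrite Rmult_1_l.
    rewrite prodR_mult. unfold nf. rewrite EJ, Rv. rewrite Rmult_comm. f_equal.
    rewrite (prodR_single _ _ (map I (bn_par B v))).
    + destruct (list_eq_dec _ _ _); [|contradiction].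
      destruct (I v), (J (APF v (map I (bn_par B v)))); reflexivity.
    + apply NoDup_all_assign.
    + apply in_all_assign. apply length_map.
    + intros x _ N. destruct (list_eq_dec _ _ _); [contradiction|reflexivity].
  - unfold indb at 1. rewrite Rmult_0_l. unfold restricts_to in R.
    apply forallb_false_ex in R. destruct R as [v [Hv Rv]].
    symmetry. apply (prodR_zero _ _ v Hv). rewrite prodR_cons. simpl FI. rewrite Rv. unfold indb. ring.
Qed.

Lemma marginal B I : bn_wf B ->
  sumR (Pp B) (filter (fun J => restricts_to B J I) (interps (bn_sig B))) = bn_prob B I.
Proof.
  intros HB. rewrite sumR_filter.
  rewrite (sumR_ext_in _ (fun J => prodR (fun a => FI B I a (J a)) (bn_sig B))).
  2: { intros J _. rewrite <- pointwise by auto. unfold indb. destruct (restricts_to _ _ _); ring. }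
  rewrite interps_B, sum_prod_interps by apply NoDup_sig.
  rewrite sig_node, prodR_flat_map. unfold bn_prob. apply prodR_ext_in. intros v _.
  unfold node. rewrite prodR_cons, prodR_map. simpl FI.
  rewrite (prodR_single _ _ (map I (bn_par B v))).
  - destruct (list_eq_dec _ _ _); [|contradiction]. unfold hp, indb. destruct (I v); simpl; ring.
  - apply NoDup_all_assign.
  - apply in_all_assign. apply length_map.
  - intros x _ N. destruct (list_eq_dec _ _ _); [contradiction|]. unfold hp. ring.
Qed.

Lemma AE B J : bn_wf B -> In J (interps (bn_sig B)) -> Aa B J * ez (Dd B J) = CC B * Pp B J.
Proof.
  intros HB HJ. unfold ez.
  destruct (stableb (bn_sig B) (unweight (sat_part (translate B) J)) J) eqn:S;
  destruct (Req_EM_T (Dd B J) 0) as [D|D].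
  - apply Dd_zero in D. destruct (nec B J HB HJ D S) as [Hc Hp].
    unfold Aa. rewrite S, Rmult_1_r. apply exp_cc; auto.
  - rewrite Rmult_0_r. destruct (Req_EM_T (Pp B J) 0) as [P|P]. rewrite P; ring.
    destruct (Pp_nz B J HB P) as [Hc Hp]. destruct (suff B J HB Hc Hp) as [Hh _].
    apply Dd_zero in Hh. contradiction.
  - unfold Aa. rewrite S, Rmult_0_l. destruct (Req_EM_T (Pp B J) 0) as [P|P]. rewrite P; ring.
    destruct (Pp_nz B J HB P) as [Hc Hp]. destruct (suff B J HB Hc Hp) as [_ Hs]. congruence.
  - unfold Aa. rewrite S, Rmult_0_l. destruct (Req_EM_T (Pp B J) 0) as [P|P]. rewrite P; ring.
    destruct (Pp_nz B J HB P) as [Hc Hp]. destruct (suff B J HB Hc Hp) as [_ Hs]. congruence.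
Qed.

Lemma CC_pos B : bn_wf B -> 0 < CC B.
Proof.
  intros HB. unfold CC. apply prodR_pos. intros v _. apply prodR_pos. intros s _.
  unfold Cvs. destruct (Rlt_dec 0 (bn_cpt B v s)); [destruct (Rlt_dec (bn_cpt B v s) 1)|]; try lra.
  apply Rinv_0_lt_compat. lra.
Qed.

Lemma Aa_nonneg B J : 0 <= Aa B J.
Proof. unfold Aa. destruct (stableb _ _ _). left; apply exp_pos. lra. Qed.

Lemma sumR_le {A} (f g : A -> R) l : (forall x, In x l -> f x <= g x) -> sumR f l <= sumR g l.
Proof.
  induction l; simpl; intros H. rewrite !sumR_nil; lra.
  rewrite !sumR_cons. pose proof (H a (or_introl eq_refl)). pose proof (IHl (fun x h => H x (or_intror h))). lra.
Qed.

Lemma S0_eq B : bn_wf B -> sumR (fun x => Aa B x * ez (Dd B x)) (interps (bn_sig B)) = CC B.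
Proof.
  intros HB. rewrite (sumR_ext_in _ (fun x => CC B * Pp B x)).
  rewrite sumR_scal, total by auto. ring. intros x Hx. apply AE; auto.
Qed.

Theorem mainTheorem6 (B : BN) (HB : bn_wf B) (I : nat -> bool) :
  exists P : interp -> R,
    (forall J, In J (interps (bn_sig B)) -> lpmln_prob (bn_sig B) (translate B) J (P J)) /\
    bn_prob B I =
      sumR P (filter (fun J => restricts_to B J I) (interps (bn_sig B))).
Proof.
  exists (Pp B). split.
  - intros J HJ eps Heps.
    assert (HS : sumR (fun x => Aa B x * ez (Dd B x)) (interps (bn_sig B)) <> 0).
    { rewrite S0_eq by auto. pose proof (CC_pos B HB). lra. }
    destruct (lim_ratio (interps (bn_sig B)) (Aa B) (Dd B) J (fun x _ => Dd_nonneg B x) (Dd_nonneg B J) HS eps Heps)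
      as [M HM].
    exists M. intros alpha Ha. specialize (HM alpha Ha).
    assert (Hden : 0 < sumR (fun x => Aa B x * exp (- (alpha * Dd B x))) (interps (bn_sig B))).
    { eapply Rlt_le_trans. 2: apply sumR_le. rewrite S0_eq by auto. apply CC_pos; auto.
      intros x _. unfold ez. destruct (Req_EM_T (Dd B x) 0) as [D|D].
      rewrite D, Rmult_0_r, Ropp_0, exp_0. lra.
      rewrite Rmult_0_r. apply Rmult_le_pos. apply Aa_nonneg. left; apply exp_pos. }
    replace (Wt (bn_sig B) (translate B) alpha J / sumR (Wt (bn_sig B) (translate B) alpha) (interps (bn_sig B)))
      with (Aa B J * exp (- (alpha * Dd B J)) / sumR (fun x => Aa B x * exp (- (alpha * Dd B x))) (interps (bn_sig B))).
    replace (Pp B J) with (Aa B J * ez (Dd B J) / sumR (fun x => Aa B x * ez (Dd B x)) (interps (bn_sig B))).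
    exact HM.
    + rewrite S0_eq, AE by auto. field. pose proof (CC_pos B HB). lra.
    + rewrite (sumR_ext_in (Wt (bn_sig B) (translate B) alpha)
                 (fun x => exp (alpha * Nh B) * (Aa B x * exp (- (alpha * Dd B x))))).
      rewrite sumR_scal, Wt_decomp. field. split. lra. apply Rgt_not_eq, exp_pos.
      intros x _. apply Wt_decomp.
  - symmetry. apply marginal; auto.
Qed.
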